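(* For every $\rho\in(0,1]$ there is a constant $C(\rho)$ such that every finite group $G$ with $\mathrm{cp}(G)\geq\rho$ satisfies $[G:\mathrm{Rad}(G)]\leq C(\rho)$. Equivalently, for finite groups $G$, $\mathrm{cp}(G)\to 0$ as $[G:\mathrm{Rad}(G)]\to\infty$.
   Context: $\mathrm{cp}(G)$ denotes the commuting probability of a finite group $G$, i.e. $|\{(x,y)\in G^2: xy=yx\}|/|G|^2$. $\mathrm{Rad}(G)$ is the solvable radical of $G$ (largest normal solvable subgroup). *)

(* Defs.v *)
From HB Require Import structures.
From mathcomp Require Import all_boot all_order all_algebra all_fingroup all_solvable.
Set Implicit Arguments. Unset Strict Implicit. Unset Printing Implicit Defensive.
Import GRing.Theory Num.Theory.

Definition cp (gT : finGroupType) (G : {group gT}) : rat :=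
  (#|[set xy in setX G G | (xy.1 * xy.2 == xy.2 * xy.1)%g]|%:R / (#|G| ^ 2)%:R)%R.

(* Solvable radical: the subgroup generated by all normal solvable subgroups
   of G (this is the largest normal solvable subgroup). *)
Definition Rad (gT : finGroupType) (G : {group gT}) : {set gT} :=
  << \bigcup_(H : {group gT} | (H <| G) && solvable H) H >>%g.

(* Main.v *)
Require Import Defs.
From HB Require Import structures.
From mathcomp Require Import all_boot all_order all_algebra all_fingroup all_solvable.
From mathcomp Require Import zify.
Set Implicit Arguments. Unset Strict Implicit. Unset Printing Implicit Defensive.
Import Order.TTheory GRing.Theory Num.Theory.

Section S.
Variable gT : finGroupType.
Implicit Types G H K : {group gT}.
Open Scope group_scope.


Lemma index_capl G H K : H \subset G -> K \subset G -> #|H : H :&: K| <= #|G : K|.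
Proof.
move=> sHG sKG.
have hm := mul_cardG H K.
have hl := Lagrange (subsetIl H K).
have hg := Lagrange sKG.
have hHK : #|(H * K)%g| <= #|G| by apply: subset_leq_card; apply: mul_subG.
have p1 := cardG_gt0 (H :&: K)%G. have p2 := cardG_gt0 K.
rewrite -(leq_pmul2l p1) -(leq_pmul2r p2) hl hm. have := leq_mul hHK (leqnn #|H :&: K|). rewrite -hg. move: (#|G : K|) (#|H :&: K|) => a b. nia.

Qed.

Lemma index_cap G H K : H \subset G -> K \subset G -> #|G : H :&: K| <= #|G : H| * #|G : K|.
Proof.
move=> sHG sKG; rewrite -(Lagrange_index sHG (subsetIl H K)).
by rewrite leq_mul2l index_capl ?orbT.
Qed.

Lemma cls_cent G x : #|x ^: G| = #|G : 'C_G[x]|.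
Proof. by rewrite index_cent1. Qed.

Lemma cls_mul G x y : #|(x * y) ^: G| <= #|x ^: G| * #|y ^: G|.
Proof.
rewrite !cls_cent.
apply: leq_trans (index_cap (subsetIl G 'C[x]) (subsetIl G 'C[y])).
apply: dvdn_leq; first exact: indexg_gt0.
apply: indexgS; apply/subsetP=> z; rewrite !in_setI => /andP[/andP[zG /cent1P cx] /andP[_ /cent1P cy]].
rewrite zG; apply/cent1P; exact: commuteM.
Qed.

Lemma cls_inv G x : #|x^-1 ^: G| = #|x ^: G|.
Proof. by rewrite classVg card_invg. Qed.

Lemma cls_conj G x g : g \in G -> #|(x ^ g) ^: G| = #|x ^: G|.
Proof. by move=> gG; rewrite classGidl. Qed.

Lemma count_pairs G :
  #|[set xy in setX G G | (xy.1 * xy.2 == xy.2 * xy.1)%g]| = \sum_(x in G) #|'C_G[x]|.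
Proof.
transitivity (\sum_(x in G) \sum_(y in 'C_G[x]) 1)%N; last by apply: eq_bigr => x _; rewrite sum1_card.
rewrite pair_big_dep /= -sum1_card; apply: eq_bigl => [[x y]] /=.
have -> : (y \in 'C_G[x]) = (y \in G) && (y * x == x * y).
  by rewrite in_setI; congr (_ && _); apply/cent1P/eqP.
rewrite !inE /=; case: (x \in G) => //=; case: (y \in G) => //=.
Qed.

Definition Bm G m := [set x in G | #|x ^: G| <= m].

Lemma sum_cent_bound G m :
  m * (\sum_(x in G) #|'C_G[x]|) <= m * #|Bm G m| * #|G| + #|G| * #|G|.
Proof.
rewrite (bigID (fun x => #|x ^: G| <= m)) /= mulnDr leq_add //.
  rewrite -mulnA leq_mul2l; apply/orP; right.
  apply: (@leq_trans (\sum_(x in G | #|x ^: G| <= m) #|G|)).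
    by apply: leq_sum => x _; exact: subset_leq_card (subsetIl _ _).
  rewrite sum_nat_const leq_mul2r; apply/orP; right.
  by apply: eq_leq; apply: eq_card => x; rewrite !inE.
rewrite big_distrr /=.
apply: leq_trans (_ : \sum_(x in G | ~~ (#|x ^: G| <= m)) #|G| <= _).
  apply: leq_sum => x /andP[xG]; rewrite -ltnNge => lt.
  rewrite -(Lagrange (subsetIl G 'C[x])) -cls_cent mulnC; exact: leq_mul (leqnn _) (ltnW lt).
rewrite -[X in _ <= X * _]sum1_card big_distrl /= [X in _ <= X]big_mkcond /= [X in X <= _]big_mkcond /=.
apply: leq_sum => x _; case: (x \in G) => //=; case: (~~ _) => //=; by rewrite mul1n.
Qed.

Section Growth.
Variable B : {set gT}.
Hypothesis B1 : 1 \in B.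
Hypothesis BV : forall x, x \in B -> x^-1 \in B.

Lemma P_step j : B ^+ j \subset B ^+ j.+1.
Proof. by rewrite expgSr -{1}(mulg1 (B ^+ j)) mulgS // sub1set. Qed.

Lemma P_mono i k : i <= k -> B ^+ i \subset B ^+ k.
Proof.
move=> /subnK <-; elim: (k - i) => [|n IH] //=.
exact: subset_trans IH (P_step _).
Qed.

Lemma P_grow j x : x \in B ^+ j.+2 -> x \notin B ^+ j.+1 ->
  #|B ^+ j| + #|B| <= #|B ^+ j.+3|.
Proof.
move=> xin xout.
have dis : B ^+ j :&: x *: B = set0.
  apply/eqP; rewrite -subset0; apply/subsetP => y; rewrite in_setI => /andP[yj /lcosetP[b bB ye]].
  case/negP: xout; rewrite expgSr.
  have -> : x = y * b^-1 by rewrite ye mulgK.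
  exact: mem_mulg yj (BV bB).
rewrite -(card_lcoset B x) -[X in X <= _]subn0 -(cards0 gT) -dis -cardsU.
apply: subset_leq_card; rewrite subUset; apply/andP; split.
  by apply: P_mono; rewrite -addn3 leq_addr.
apply/subsetP => y /lcosetP[b bB ->]; rewrite (expgSr _ j.+2); exact: mem_mulg.
Qed.

Lemma P_stable j : B ^+ j.+1 = B ^+ j -> <<B>> \subset B ^+ j.
Proof.
move=> st.
have e : forall k, B ^+ (j + k) = B ^+ j.
  elim=> [|k IH]; first by rewrite addn0.
  by rewrite addnS expgSr IH -expgSr st.
case: (gen_expgs B) => n ->.
have -> : 1 |: B = B by apply/setP => y; rewrite !inE; case: eqP => // ->; rewrite B1.
by rewrite -(e n) P_mono // leq_addl.
Qed.

Lemma P_sub (G : {group gT}) j : B \subset G -> B ^+ j \subset G.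
Proof.
move=> sBG; elim: j => [|j IH]; first exact: sub1G.
by rewrite expgS mul_subG.
Qed.

Lemma gen_small (G : {group gT}) N : B \subset G -> #|G| <= N * #|B| ->
  <<B>> \subset B ^+ (3 * N).+1.
Proof.
move=> sBG hG.
case: (boolP [exists i : 'I_N.+1, B ^+ (3 * i).+2 == B ^+ (3 * i).+1]).
  case/existsP => i /eqP st.
  apply: subset_trans (P_stable st) (P_mono _).
  by rewrite ltnS leq_mul2l -ltnS ltn_ord.
rewrite negb_exists => /forallP hne.
have key : forall i, i <= N.+1 -> i * #|B| <= #|B ^+ (3 * i)|.
  elim=> [|i IH] lei; first by rewrite mul0n.
  have ltiN : i < N.+1 by [].
  have := hne (Ordinal ltiN) => /= ne.
  have : B ^+ (3 * i).+1 \proper B ^+ (3 * i).+2 by rewrite properEneq eq_sym ne P_step.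
  case/properP => _ [x xin xout].
  have g := P_grow xin xout.
  have e3 : ((3 * i).+3 = 3 * i.+1)%N by rewrite mulnS addnC addn3.
  rewrite e3 in g; rewrite mulSn.
  apply: leq_trans g; rewrite addnC leq_add2r; apply: IH; exact: ltnW.
have := key _ (leqnn _).
have := subset_leq_card (P_sub (3 * N.+1) sBG).
have : 0 < #|B| by apply/card_gt0P; exists 1.
move: #|B| #|G| #|B ^+ _| hG => b g p; nia.
Qed.
End Growth.

Lemma P_cls (G : {group gT}) m j x : x \in (Bm G m) ^+ j -> #|x ^: G| <= (m ^ j)%N.
Proof.
elim: j x => [|j IH] x.
  by rewrite expg0 inE => /eqP ->; rewrite class1G cards1.
rewrite expgS => /mulsgP[b y bB yP ->].
apply: leq_trans (cls_mul _ _ _) _; rewrite expnS leq_mul //.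
  by move: bB; rewrite inE => /andP[].
exact: IH.
Qed.

Lemma cent_index (D : {group gT}) M (S : {set gT}) :
  (forall y, y \in S -> #|D : 'C_D[y]| <= M) -> #|D : 'C_D(S)| <= (M ^ #|S|)%N.
Proof.
elim: {S}_.+1 {-2}S (ltnSn #|S|) => // n IH S.
case: (set_0Vmem S) => [-> _ _|[x xS] ltS hS].
  by rewrite cards0 expn0 (_ : 'C_D(set0) = D) ?indexgg // ; apply/setIidPl/subsetP=> y _; apply/centP=> z; rewrite inE.
rewrite -(setD1K xS) centU cent_set1 cardsU1 !inE eqxx /= add1n expnS.
have -> : D :&: ('C[x] :&: 'C(S :\ x)) = 'C_D[x] :&: 'C_D(S :\ x).
  by rewrite setIACA setIid.
apply: leq_trans (index_cap (subsetIl D _) (subsetIl D _)) _.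
apply: leq_mul; first exact: hS.
apply: IH => [|y /setD1P[_ yS]]; last exact: hS.
by move: ltS; rewrite (cardsD1 x S) xS add1n ltnS.
Qed.

Lemma card_bigcup_le (I : finType) (P : pred I) (F : I -> {set gT}) :
  #|\bigcup_(i | P i) F i| <= \sum_(i | P i) #|F i|.
Proof.
apply: (big_ind2 (fun (X : {set gT}) k => #|X| <= k)); first by rewrite cards0.
  move=> X1 n1 X2 n2 h1 h2; apply: leq_trans (leq_card_setU X1 X2).1 _; exact: leq_add.
by [].
Qed.

Lemma struct_main (G D : {group gT}) M :
  D \subset G -> G \subset 'N(D) -> (forall y, y \in D -> #|y ^: G| <= M) ->
  exists E : {group gT}, [/\ E <| G, solvable E, E \subset D & #|D : E| <= (M ^ (M + M * M))%N].
Proof.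
move=> sDG nDG hM.
have M1 : 0 < M by apply: leq_trans (hM 1 (group1 D)); rewrite class1G cards1.
have hDc : forall y, y \in D -> #|D : 'C_D[y]| <= M.
  move=> y yD; apply: leq_trans (hM y yD); rewrite cls_cent.
  have := index_capl sDG (subsetIl G 'C[y]).
  by rewrite setIA (setIidPl sDG).
case: (@arg_maxnP _ 1 (mem D) (fun x => #|x ^: D|) (group1 D)) => a aD amax.
set n := #|a ^: D|.
pose pk y := odflt 1 [pick t in D | a ^ t == y].
have pkP : forall y, y \in a ^: D -> pk y \in D /\ a ^ pk y = y.
  move=> y /imsetP[t tD ->]; rewrite /pk; case: pickP => [u /andP[uD /eqP <-]|] //=.
  by move/(_ t); rewrite tD eqxx.
set T0 := [set pk y | y in a ^: D].
have sT0D : T0 \subset D by apply/subsetP => t /imsetP[y yc ->]; case: (pkP y yc).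
set T := class_support T0 G.
set A := a ^: G.
set S := A :|: T.
have sAD : A \subset D by apply/subsetP => z /imsetP[g gG ->]; rewrite memJ_norm // (subsetP nDG).
have sTD : T \subset D.
  apply/subsetP => z /imset2P[t g tT gG ->]; rewrite memJ_norm ?(subsetP nDG) //; exact: (subsetP sT0D).
have nM : n <= M by rewrite /n -index_cent1; apply: hDc.
have cardT : #|T| <= M * M.
  rewrite /T class_supportEl; apply: leq_trans (card_bigcup_le _ _) _.
  apply: leq_trans (_ : \sum_(t in T0) M <= _).
    by apply: leq_sum => t tT; apply: hM; exact: (subsetP sT0D).
  rewrite sum_nat_const mulnC leq_mul2l; apply/orP; right.
  exact: leq_trans (leq_imset_card _ _) nM.
have cardS : #|S| <= M + M * M.
  apply: leq_trans (leq_card_setU A T).1 _; apply: leq_add => //.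
  by apply: hM.
exists ('C_D(S))%G; split.
    by rewrite /normal subIset ?sDG //= normsI // norms_cent // normsU // ?class_norm // class_support_norm.
  have key : forall c g, c \in 'C_D(S) -> g \in D -> [~ c, g] \in <<A>>.
    move=> c g /setIP[cD cS] gD.
    move/centP: cS => cc.
    have acD : a * c \in D by rewrite groupM.
    set Y := [set y * c | y in a ^: D].
    have sY : Y \subset (a * c) ^: D.
      apply/subsetP => z /imsetP[y yc ->]; case: (pkP y yc) => tD ey.
      have tT : pk y \in S.
        rewrite inE; apply/orP; right; rewrite -(conjg1 (pk y)).
        by apply: memJ_class_support; [apply: imset_f | apply: group1].
      have ct := cc _ tT.
      have -> : y * c = (a * c) ^ pk y by rewrite conjMg ey conjgE ct mulKg.
      exact: memJ_class.
    have cardY : #|Y| = n by rewrite card_imset //; exact: mulIg.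
    have eY : Y = (a * c) ^: D.
      by apply/eqP; rewrite eqEcard sY cardY; exact: amax.
    have : (a * c) ^ g \in Y by rewrite eY memJ_class.
    case/imsetP => y yc e.
    have gG : g \in G := subsetP sDG g gD.
    have ycA : y \in A by apply: (subsetP (classS a sDG)).
    have agA : a ^ g \in A by apply: memJ_class.
    have wA : (a ^ g)^-1 * y \in <<A>> by rewrite groupM ?groupV // mem_gen.
    have cw : commute c ((a ^ g)^-1 * y).
      apply: commuteM; last by apply: cc; rewrite inE ycA.
      by apply: commuteV; apply: cc; rewrite inE agA.
    have ecg : c ^ g = (a ^ g)^-1 * y * c.
      by rewrite -mulgA -e conjMg mulKg.
    by rewrite commgEl ecg -cw mulKg.
  apply/derivedP; exists 2; rewrite dergSn derg1; apply/commG1P.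
  have sub1 : [~: 'C_D(S), 'C_D(S)] \subset <<A>>.
    rewrite /commutator gen_subG; apply/subsetP => z /imset2P[c g cE gE ->].
    exact: key cE (subsetP (subsetIl D _) g gE).
  have sub2 : 'C_D(S) \subset 'C(<<A>>).
    by rewrite cent_gen; apply: subset_trans (subsetIr D _) (centS (subsetUl A T)).
  exact: subset_trans (der1_subG _) (subset_trans sub2 (centS sub1)).
  exact: subsetIl.
have h := @cent_index D M S.
have h2 : #|D : 'C_D(S)| <= (M ^ #|S|)%N.
  by apply: h => y yS; apply: hDc; apply: (subsetP _ y yS); rewrite subUset sAD.
exact: leq_trans h2 (leq_pexp2l M1 cardS).
Qed.
Lemma normB G m : G \subset 'N(Bm G m).
Proof.
apply/subsetP => g gG; rewrite inE; apply/subsetP => x; rewrite mem_conjg !inE => /andP[xG hx].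
have xG' : x \in G by rewrite -[x](conjgKV g) groupJ.
rewrite xG'; rewrite classGidl // in hx; by rewrite groupV.
Qed.
End S.

Lemma cp_nat (rho : rat) (q s g : nat) : (0 < g)%N -> (1 <= rho * q%:R)%R ->
  (rho <= s%:R / (g ^ 2)%:R)%R -> (g ^ 2 <= q * s)%N.
Proof.
move=> g0 hq hr.
have g2 : (0 < (g ^ 2)%:R :> rat)%R by rewrite ltr0n expn_gt0 g0.
have h1 : (rho * (g ^ 2)%:R <= s%:R)%R by rewrite -ler_pdivlMr.
rewrite -(ler_nat rat) natrM.
apply: le_trans (_ : (rho * q%:R * (g ^ 2)%:R <= _)%R).
  by rewrite ler_peMl // ltW.
by rewrite [(rho * _)%R]mulrC -mulrA ler_wpM2l.
Qed.

Section T.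
Variable gT : finGroupType.
Implicit Types G H K : {group gT}.
Open Scope group_scope.

Definition Cst (q : nat) := let m := (2 * q)%N in let M := (m ^ (3 * m).+1)%N in (m * M ^ (M + M * M))%N.

Lemma core_bound (rho : rat) (q : nat) G : (0 < q)%N -> (1 <= rho * q%:R)%R -> (rho <= cp G)%R ->
  #|G : Rad G| <= Cst q.
Proof.
move=> q0 hq hcp.
rewrite /Cst.
set m := (2 * q)%N.
set K := m.
set M := (m ^ (3 * K).+1)%N.
have hGS := cp_nat (cardG_gt0 G) hq hcp.
rewrite count_pairs in hGS.
have hsum := sum_cent_bound G m.
set B := Bm G m.
have hGB : #|G| <= K * #|B|.
  move: hGS hsum; rewrite /m /K.
  move: (\sum_(x in G) #|('C_G[x])%g|)%N #|B| #|G| (cardG_gt0 G) => x b g g0.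
  nia.
have B1 : (1 : gT) \in B by rewrite inE group1 class1G cards1 /m muln_gt0 q0.
have BV : forall x, x \in B -> x^-1 \in B.
  by move=> x; rewrite !inE cls_inv groupV.
have sBG : B \subset G by apply/subsetP => x; rewrite inE => /andP[].
have sDP := gen_small B1 BV sBG hGB.
set D := <<B>>%G.
have sDG : D \subset G by rewrite gen_subG.
have nDG : G \subset 'N(D) by apply: norms_gen; apply: normB.
have hM : forall y, y \in D -> #|y ^: G| <= M.
  by move=> y yD; apply: P_cls; apply: (subsetP sDP).
case: (struct_main sDG nDG hM) => E [nEG solE sED hDE].
have sER : E \subset Rad G.
  rewrite /Rad; apply: sub_gen.
  by apply: (bigcup_sup E); rewrite nEG solE.
apply: (@leq_trans #|G : E|).
  apply: dvdn_leq; first exact: indexg_gt0.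
  rewrite /Rad; exact: indexgS.
rewrite -(Lagrange_index sDG sED) leq_mul //.
have := Lagrange sDG.
have : #|B| <= #|D| by apply: subset_leq_card; apply: sub_gen.
move: hGB (cardG_gt0 D); move: #|D| #|G : D| #|G| #|B| => a b c e; nia.
Qed.
End T.

Theorem proposition6 :
  forall rho : rat, (0 < rho)%R -> (rho <= 1)%R ->
  exists C : nat,
    forall (gT : finGroupType) (G : {group gT}),
      (rho <= cp G)%R -> (#|G : Rad G|)%g <= C.
Proof.
move=> rho rho0 _.
case: (denqP rho) => d hd.
have hq : (1 <= rho * (d.+1)%:R)%R.
  have := numqE rho; rewrite hd => <-.
  by rewrite ler1z -gtz0_ge1 numq_gt0.
exists (Cst d.+1) => gT G hcp.
exact: core_bound (ltn0Sn d) hq hcp.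
Qed.
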